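(* Let $\eta_\varepsilon$ be as in the context. Fix $B>0$, $a\in(-1,1)$, $b\in(-1,1)$ and arbitrary real numbers $\dot a,\dot b,\dot B$ (treated as independent real parameters). Put $z=\varepsilon^{-1}B(x-a)$ and define $$ L_\varepsilon=\frac{\varepsilon\dot b}{\sqrt{1-b^2}}\int_{\mathbb R}\eta_\varepsilon^2(x)\tanh(z)\,dx+b\sqrt{1-b^2}\,B\dot a\int_{\mathbb R}\eta_\varepsilon^2(x)\,\mathrm{sech}^2(z)\,dx-\varepsilon b\sqrt{1-b^2}\,\dot B B^{-1}\int_{\mathbb R}\eta_\varepsilon^2(x)\,z\,\mathrm{sech}^2(z)\,dx $$ $$ \qquad+(1-b^2)B^2\int_{\mathbb R}\eta_\varepsilon^2(x)\,\mathrm{sech}^4(z)\,dx+\frac12(1-b^2)^2\int_{\mathbb R}\eta_\varepsilon^4(x)\,\mathrm{sech}^4(z)\,dx . $$ Then $$ \lim_{\varepsilon\to0}\frac{L_\varepsilon}{2\varepsilon}=-\frac{\dot b}{\sqrt{1-b^2}}\Big(a-\frac13a^3\Big)+b\sqrt{1-b^2}\,(1-a^2)\,\dot a+\frac23(1-a^2)(1-b^2)B+\frac{1}{3B}(1-a^2)^2(1-b^2)^2 . $$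
   Context: For all sufficiently small $\varepsilon>0$, $\eta_\varepsilon:\mathbb R\to(0,\infty)$ is a smooth solution of $\varepsilon^2\eta_\varepsilon''+(1-x^2-\eta_\varepsilon^2)\eta_\varepsilon=0$ on $\mathbb R$ that decays to zero as $|x|\to\infty$ faster than any exponential, and it has the following properties: $\eta_\varepsilon(x)\to\eta_0(x)$ pointwise as $\varepsilon\to0$, where $\eta_0(x)=(1-x^2)^{1/2}$ for $|x|<1$ and $\eta_0(x)=0$ for $|x|>1$; for every compact $K\subset(-1,1)$ there is $C_K>0$ with $\|\eta_\varepsilon-\eta_0\|_{C^1(K)}\le C_K\varepsilon^2$; and there is $C>0$ with $\|\eta_\varepsilon-\eta_0\|_{L^\infty}\le C\varepsilon^{1/3}$, $\|\eta_\varepsilon'\|_{L^\infty}\le C\varepsilon^{-1/3}$, $\|\eta_\varepsilon''\|_{L^\infty}\le C\varepsilon^{-1}$. ($L_\varepsilon$ is the Lagrangian $L(v)=\frac{i}{2}\varepsilon\int\eta_\varepsilon^2(v\bar v_t-\bar v v_t)dx+\varepsilon^2\int\eta_\varepsilon^2|v_x|^2dx+\frac12\int\eta_\varepsilon^4(1-|v|^2)^2dx$ evaluated on the dark-soliton ansatz $v=\sqrt{1-b^2}\tanh(\varepsilon^{-1}B(x-a))+ib$.) *)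

(* Defs.v *)
From Stdlib Require Import Reals Lra ClassicalEpsilon.
Open Scope R_scope.

(* Limiting profile eta_0(x) = sqrt(1-x^2) for |x|<1, 0 for |x|>1
   (value 0 at |x| = 1, which is immaterial). *)
Definition eta0 (x : R) : R :=
  if Rlt_dec (Rabs x) 1 then sqrt (1 - x ^ 2) else 0.

Definition deta0 (x : R) : R := - x / sqrt (1 - x ^ 2).

Definition sech (x : R) : R := / cosh x.

Definition is_improper_integral (f : R -> R) (l : R) : Prop :=
  exists I : forall u v : R, Riemann_integrable f u v,
    forall d, 0 < d -> exists M, forall u v, u < - M -> M < v ->
      Rabs (RiemannInt (I u v) - l) < d.

(* The value of the improper integral over R (chosen by classical choice;
   meaningful whenever the integral exists). *)
Definition ImpInt (f : R -> R) : R :=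
  epsilon (inhabits 0) (fun l => is_improper_integral f l).

(* Standing assumptions on the family eta_eps.
   D n eps x is the n-th x-derivative of eta_eps at x (D 0 eps = eta_eps);
   the assumptions hold for all 0 < eps < eps0. *)
Definition eta_family (eps0 : R) (D : nat -> R -> R -> R) : Prop :=
  0 < eps0 /\
  (forall eps, 0 < eps < eps0 -> forall n x,
      derivable_pt_lim (D n eps) x (D (S n) eps x)) /\
  (forall eps, 0 < eps < eps0 -> forall x, 0 < D 0%nat eps x) /\
  (forall eps, 0 < eps < eps0 -> forall x,
      eps ^ 2 * D 2%nat eps x + (1 - x ^ 2 - (D 0%nat eps x) ^ 2) * D 0%nat eps x = 0) /\
  (forall eps, 0 < eps < eps0 -> forall k d, 0 < d ->
      exists M, forall x, M < Rabs x -> Rabs (D 0%nat eps x) * exp (k * Rabs x) < d) /\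
  (forall x d, 0 < d -> exists e1, 0 < e1 /\
      forall eps, 0 < eps < e1 -> eps < eps0 -> Rabs (D 0%nat eps x - eta0 x) < d) /\
  (forall K : R -> Prop, compact K -> (forall x, K x -> -1 < x < 1) ->
      exists C, 0 < C /\ forall eps, 0 < eps < eps0 -> forall x, K x ->
        Rabs (D 0%nat eps x - eta0 x) + Rabs (D 1%nat eps x - deta0 x) <= C * eps ^ 2) /\
  (exists C, 0 < C /\ forall eps, 0 < eps < eps0 -> forall x,
      Rabs (D 0%nat eps x - eta0 x) <= C * Rpower eps (1/3) /\
      Rabs (D 1%nat eps x) <= C * Rpower eps (-(1/3)) /\
      Rabs (D 2%nat eps x) <= C * / eps).

Definition L_eps (eta : R -> R) (eps B a b ad bd Bd : R) : R :=
  let z := fun x => B * (x - a) / eps in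
  eps * bd / sqrt (1 - b ^ 2) * ImpInt (fun x => eta x ^ 2 * tanh (z x))
  + b * sqrt (1 - b ^ 2) * B * ad * ImpInt (fun x => eta x ^ 2 * sech (z x) ^ 2)
  - eps * b * sqrt (1 - b ^ 2) * Bd / B * ImpInt (fun x => eta x ^ 2 * z x * sech (z x) ^ 2)
  + (1 - b ^ 2) * B ^ 2 * ImpInt (fun x => eta x ^ 2 * sech (z x) ^ 4)
  + / 2 * (1 - b ^ 2) ^ 2 * ImpInt (fun x => eta x ^ 4 * sech (z x) ^ 4).

(* Main.v *)
Require Import Defs.
From Stdlib Require Import Reals.
From Stdlib Require Import Psatz Lra ClassicalEpsilon FunctionalExtensionality.
Open Scope R_scope.

Definition contR (f : R -> R) := forall x, continuity_pt f x.

Lemma c_const k x : continuity_pt (fun _ => k) x.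
Proof. apply continuity_pt_const; intros ? ?; reflexivity. Qed.
Lemma c_id x : continuity_pt (fun y => y) x.
Proof. apply derivable_continuous_pt; apply derivable_pt_id. Qed.
Lemma c_plus f g x : continuity_pt f x -> continuity_pt g x -> continuity_pt (fun y => f y + g y) x.
Proof. intros; exact (continuity_pt_plus f g x H H0). Qed.
Lemma c_minus f g x : continuity_pt f x -> continuity_pt g x -> continuity_pt (fun y => f y - g y) x.
Proof. intros; exact (continuity_pt_minus f g x H H0). Qed.
Lemma c_mult f g x : continuity_pt f x -> continuity_pt g x -> continuity_pt (fun y => f y * g y) x.
Proof. intros; exact (continuity_pt_mult f g x H H0). Qed.
Lemma c_opp f x : continuity_pt f x -> continuity_pt (fun y => - f y) x.
Proof. intros; exact (continuity_pt_opp f x H). Qed.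
Lemma c_inv f x : continuity_pt f x -> f x <> 0 -> continuity_pt (fun y => / f y) x.
Proof. intros; exact (continuity_pt_inv f x H H0). Qed.
Lemma c_div f g x : continuity_pt f x -> continuity_pt g x -> g x <> 0 -> continuity_pt (fun y => f y / g y) x.
Proof. intros; exact (continuity_pt_div f g x H H0 H1). Qed.
Lemma c_pow f n x : continuity_pt f x -> continuity_pt (fun y => f y ^ n) x.
Proof. intros H; induction n; simpl. apply c_const. apply c_mult; auto. Qed.
Lemma c_comp f g x : continuity_pt g x -> continuity_pt f (g x) -> continuity_pt (fun y => f (g y)) x.
Proof. intros; exact (continuity_pt_comp g f x H H0). Qed.
Lemma c_exp x : continuity_pt exp x.
Proof. apply derivable_continuous_pt; apply derivable_pt_exp. Qed.
Lemma c_cosh x : continuity_pt cosh x.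
Proof. apply derivable_continuous_pt; apply derivable_pt_cosh. Qed.
Lemma c_sinh x : continuity_pt sinh x.
Proof. apply derivable_continuous_pt; apply derivable_pt_sinh. Qed.
Lemma c_abs x : continuity_pt Rabs x.
Proof. apply Rcontinuity_abs. Qed.

Lemma cosh_pos x : 0 < cosh x.
Proof. unfold cosh. pose proof (exp_pos x); pose proof (exp_pos (-x)). lra. Qed.
Lemma c_tanh x : continuity_pt tanh x.
Proof. unfold tanh. apply c_div. apply c_sinh. apply c_cosh. pose proof (cosh_pos x); lra. Qed.
Lemma c_sech x : continuity_pt sech x.
Proof. unfold sech. apply c_inv. apply c_cosh. pose proof (cosh_pos x); lra. Qed.

Lemma dcont f f' : (forall x, derivable_pt_lim f x (f' x)) -> contR f.
Proof. intros H x. apply derivable_continuous_pt. exists (f' x). apply H. Qed.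

Lemma c_app f g x : contR f -> continuity_pt g x -> continuity_pt (fun y => f (g y)) x.
Proof. intros Hf Hg. apply c_comp; auto. Qed.

Ltac cont :=
  repeat (match goal with
  | |- contR _ => intro
  | |- continuity_pt (fun _ => ?k) _ => apply c_const
  | |- continuity_pt (fun y => y) _ => apply c_id
  | |- continuity_pt (fun y => _ + _) _ => apply c_plus
  | |- continuity_pt (fun y => _ - _) _ => apply c_minus
  | |- continuity_pt (fun y => _ * _) _ => apply c_mult
  | |- continuity_pt (fun y => _ / _) _ => apply c_div
  | |- continuity_pt (fun y => - _) _ => apply c_opp
  | |- continuity_pt (fun y => / _) _ => apply c_inv
  | |- continuity_pt (fun y => _ ^ _) _ => apply c_pow
  | |- continuity_pt (fun y => exp _) _ => apply (c_comp exp); [|apply c_exp]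
  | |- continuity_pt (fun y => cosh _) _ => apply (c_comp cosh); [|apply c_cosh]
  | |- continuity_pt (fun y => sinh _) _ => apply (c_comp sinh); [|apply c_sinh]
  | |- continuity_pt (fun y => tanh _) _ => apply (c_comp tanh); [|apply c_tanh]
  | |- continuity_pt (fun y => sech _) _ => apply (c_comp sech); [|apply c_sech]
  | |- continuity_pt (fun y => Rabs _) _ => apply (c_comp Rabs); [|apply c_abs]
  | |- continuity_pt Ropp _ => apply (c_opp (fun y => y)); apply c_id
  | |- continuity_pt exp _ => apply c_exp
  | |- continuity_pt cosh _ => apply c_cosh
  | |- continuity_pt sinh _ => apply c_sinh
  | |- continuity_pt tanh _ => apply c_tanh
  | |- continuity_pt sech _ => apply c_sech
  | |- continuity_pt Rabs _ => apply c_abs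
  | H : contR ?f |- continuity_pt (fun y => ?f _) _ => apply (c_app f); [exact H|]
  | H : contR ?f |- continuity_pt ?f _ => apply H
  end); try (cbv beta; lra).

Definition RI (f : R -> R) (u v : R) : R :=
  epsilon (inhabits 0) (fun l => exists pr : Riemann_integrable f u v, RiemannInt pr = l).

Lemma RI_eq f u v (pr : Riemann_integrable f u v) : RI f u v = RiemannInt pr.
Proof.
  unfold RI. assert (H : exists l, exists pr : Riemann_integrable f u v, RiemannInt pr = l) by (exists (RiemannInt pr), pr; reflexivity).
  destruct (epsilon_spec (inhabits 0) _ H) as [pr' E]. rewrite <- E; apply RiemannInt_P5.
Qed.

Definition ri_of_cont f (H : contR f) u v : Riemann_integrable f u v :=
  match Rle_dec u v with
  | left h => @continuity_implies_RiemannInt f u v h (fun x _ => H x)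
  | right h => RiemannInt_P1 (@continuity_implies_RiemannInt f v u (Rlt_le _ _ (Rnot_le_lt _ _ h)) (fun x _ => H x))
  end.

Lemma RI_chasles f (H : contR f) u w v : RI f u w + RI f w v = RI f u v.
Proof.
  rewrite (RI_eq _ _ _ (ri_of_cont f H u w)), (RI_eq _ _ _ (ri_of_cont f H w v)), (RI_eq _ _ _ (ri_of_cont f H u v)).
  apply RiemannInt_P26.
Qed.

Lemma RI_lin f g l (Hf : contR f) (Hg : contR g) u v :
  RI (fun x => f x + l * g x) u v = RI f u v + l * RI g u v.
Proof.
  rewrite (RI_eq _ _ _ (RiemannInt_P10 l (ri_of_cont f Hf u v) (ri_of_cont g Hg u v))).
  rewrite (RI_eq _ _ _ (ri_of_cont f Hf u v)), (RI_eq _ _ _ (ri_of_cont g Hg u v)).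
  apply RiemannInt_P13.
Qed.

Lemma RI_ext f g u v : (forall x, f x = g x) -> RI f u v = RI g u v.
Proof. intros H. replace g with f; auto. apply functional_extensionality; auto. Qed.

Lemma RI_le f g (Hf : contR f) (Hg : contR g) u v : u <= v ->
  (forall x, u <= x <= v -> f x <= g x) -> RI f u v <= RI g u v.
Proof.
  intros Huv H. rewrite (RI_eq _ _ _ (ri_of_cont f Hf u v)), (RI_eq _ _ _ (ri_of_cont g Hg u v)).
  apply RiemannInt_P19; auto. intros; apply H; lra.
Qed.

Lemma RI_abs_le f g (Hf : contR f) (Hg : contR g) u v : u <= v ->
  (forall x, u <= x <= v -> Rabs (f x) <= g x) -> Rabs (RI f u v) <= RI g u v.
Proof.
  intros Huv H. rewrite (RI_eq _ _ _ (ri_of_cont f Hf u v)).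
  eapply Rle_trans. apply (RiemannInt_P17 _ (RiemannInt_P16 (ri_of_cont f Hf u v))); auto.
  rewrite <- (RI_eq _ _ _ (RiemannInt_P16 (ri_of_cont f Hf u v))).
  apply RI_le; auto. intro; cont. 
Qed.

Lemma RI_FTC F f : (forall x, derivable_pt_lim F x (f x)) -> contR f ->
  forall u v, RI f u v = F v - F u.
Proof.
  intros HD Hc u v.
  set (dF := (fun x => exist (fun l => derivable_pt_abs F x l) (f x) (HD x)) : derivable F).
  set (C := @mkC1 F dF Hc).
  rewrite (RI_eq _ _ _ (ri_of_cont f Hc u v)).
  exact (@FTC_Riemann C u v (ri_of_cont f Hc u v)).
Qed.

Lemma RI_swap f (H : contR f) u v : RI f u v = - RI f v u.
Proof.
  pose proof (RI_chasles f H u v u). pose proof (RI_chasles f H u u u). lra.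
Qed.

Lemma Rabs_le_inv x y : Rabs x <= y -> - y <= x <= y.
Proof. intros H. pose proof (Rle_abs x). pose proof (Rle_abs (- x)). rewrite Rabs_Ropp in H1. lra. Qed.

Lemma dl_eq f x l l' : derivable_pt_lim f x l -> l = l' -> derivable_pt_lim f x l'.
Proof. intros H ->; exact H. Qed.
Lemma d_const k x : derivable_pt_lim (fun _ => k) x 0.
Proof. apply derivable_pt_lim_const. Qed.
Lemma d_id x : derivable_pt_lim (fun y => y) x 1.
Proof. apply derivable_pt_lim_id. Qed.
Lemma d_plus f g x a b : derivable_pt_lim f x a -> derivable_pt_lim g x b -> derivable_pt_lim (fun y => f y + g y) x (a + b).
Proof. intros; exact (derivable_pt_lim_plus f g x a b H H0). Qed.
Lemma d_minus f g x a b : derivable_pt_lim f x a -> derivable_pt_lim g x b -> derivable_pt_lim (fun y => f y - g y) x (a - b).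
Proof. intros; exact (derivable_pt_lim_minus f g x a b H H0). Qed.
Lemma d_mult f g x a b : derivable_pt_lim f x a -> derivable_pt_lim g x b -> derivable_pt_lim (fun y => f y * g y) x (a * g x + f x * b).
Proof. intros; exact (derivable_pt_lim_mult f g x a b H H0). Qed.
Lemma d_opp f x a : derivable_pt_lim f x a -> derivable_pt_lim (fun y => - f y) x (- a).
Proof. intros; exact (derivable_pt_lim_opp f x a H). Qed.
Lemma d_comp f g x a b : derivable_pt_lim g x a -> derivable_pt_lim f (g x) b -> derivable_pt_lim (fun y => f (g y)) x (b * a).
Proof. intros; exact (derivable_pt_lim_comp g f x a b H H0). Qed.
Lemma d_pow f n x a : derivable_pt_lim f x a -> derivable_pt_lim (fun y => f y ^ n) x (INR n * f x ^ (pred n) * a).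
Proof.
  intros H. apply (d_comp (fun t => t ^ n) f x a). exact H. apply derivable_pt_lim_pow.
Qed.
Lemma d_exp x : derivable_pt_lim exp x (exp x).
Proof. apply derivable_pt_lim_exp. Qed.
Lemma d_div f g x a b : derivable_pt_lim f x a -> derivable_pt_lim g x b -> g x <> 0 ->
  derivable_pt_lim (fun y => f y / g y) x ((a * g x - b * f x) / (g x)²).
Proof. intros; exact (derivable_pt_lim_div f g x a b H H0 H1). Qed.
Lemma d_inv f x a : derivable_pt_lim f x a -> f x <> 0 ->
  derivable_pt_lim (fun y => / f y) x (- a / (f x)²).
Proof.
  intros H H0. replace (fun y => / f y) with (fun y => 1 / f y) by (apply functional_extensionality; intros; unfold Rdiv; ring).
  eapply dl_eq. apply d_div; [apply d_const|exact H|exact H0]. unfold Rsqr; field; auto.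
Qed.

Ltac dtac :=
  repeat (match goal with
  | |- derivable_pt_lim (fun _ => ?k) _ _ => apply d_const
  | |- derivable_pt_lim (fun y => y) _ _ => apply d_id
  | |- derivable_pt_lim (fun y => _ + _) _ _ => apply d_plus
  | |- derivable_pt_lim (fun y => _ - _) _ _ => apply d_minus
  | |- derivable_pt_lim (fun y => _ * _) _ _ => apply d_mult
  | |- derivable_pt_lim (fun y => - _) _ _ => apply d_opp
  | |- derivable_pt_lim (fun y => _ ^ _) _ _ => apply d_pow
  | |- derivable_pt_lim (fun y => exp _) _ _ => apply (d_comp exp); [|apply d_exp]
  | |- derivable_pt_lim exp _ _ => apply d_exp
  | |- derivable_pt_lim Ropp _ _ => apply (d_opp (fun y => y)); apply d_id
  end).

Lemma imp_RI f l : is_improper_integral f l -> forall d, 0 < d -> exists M,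
  forall u v, u < - M -> M < v -> Rabs (RI f u v - l) < d.
Proof.
  intros [I HI] d Hd. destruct (HI d Hd) as [M HM]. exists M; intros u v H1 H2.
  rewrite (RI_eq _ _ _ (I u v)). auto.
Qed.

Lemma imp_bound f l c Q : is_improper_integral f l ->
  (forall dl, 0 < dl -> exists M, forall u v, u < - M -> M < v -> Rabs (RI f u v - c) <= Q + dl) ->
  Rabs (l - c) <= Q.
Proof.
  intros Hl H. destruct (Rle_dec (Rabs (l - c)) Q) as [h|h]; auto. exfalso.
  set (dl := (Rabs (l - c) - Q) / 2).
  assert (Hdl : 0 < dl) by (unfold dl; lra).
  destruct (imp_RI f l Hl dl Hdl) as [M1 HM1]. destruct (H dl Hdl) as [M2 HM2].
  set (T := Rabs M1 + Rabs M2 + 1).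
  assert (A1 := HM1 (- T) T ltac:(unfold T; pose proof (Rle_abs M1); pose proof (Rabs_pos M2); lra)
                    ltac:(unfold T; pose proof (Rle_abs M1); pose proof (Rabs_pos M2); lra)).
  assert (A2 := HM2 (- T) T ltac:(unfold T; pose proof (Rle_abs M2); pose proof (Rabs_pos M1); lra)
                    ltac:(unfold T; pose proof (Rle_abs M2); pose proof (Rabs_pos M1); lra)).
  assert (Rabs (l - c) <= Rabs (RI f (-T) T - l) + Rabs (RI f (-T) T - c)).
  { replace (l - c) with (- (RI f (-T) T - l) + (RI f (-T) T - c)) by ring.
    eapply Rle_trans. apply Rabs_triang. rewrite Rabs_Ropp. lra. }
  unfold dl in *; lra.
Qed.

Lemma imp_unique f l l' : is_improper_integral f l -> is_improper_integral f l' -> l = l'.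
Proof.
  intros H1 H2.
  assert (forall Q, 0 < Q -> Rabs (l' - l) <= Q).
  { intros Q HQ. apply (imp_bound f l' l Q H2). intros dl Hdl.
    destruct (imp_RI f l H1 Q HQ) as [M HM]. exists M. intros u v Hu Hv.
    specialize (HM u v Hu Hv). lra. }
  destruct (Req_dec l l') as [e|ne]; auto. exfalso.
  assert (0 < Rabs (l' - l)) by (apply Rabs_pos_lt; lra).
  specialize (H (Rabs (l' - l) / 2) ltac:(lra)). lra.
Qed.

Lemma ImpInt_eq f l : is_improper_integral f l -> ImpInt f = l.
Proof.
  intros H. unfold ImpInt. apply imp_unique with f; auto.
  apply (epsilon_spec (inhabits 0) (fun l => is_improper_integral f l)). eauto.
Qed.

Lemma exp_small K d : 0 <= K -> 0 < d -> exists T, 0 <= T /\ forall t, T <= t -> K * exp (- t) < d.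
Proof.
  intros HK Hd. exists (K / d). split. apply Rmult_le_pos; auto. left; apply Rinv_0_lt_compat; auto.
  intros t Ht. rewrite exp_Ropp.
  assert (1 + t <= exp t) by apply exp_ineq1_le.
  assert (0 <= t) by (eapply Rle_trans; [|exact Ht]; apply Rmult_le_pos; auto; left; apply Rinv_0_lt_compat; auto).
  assert (K <= d * t) by (apply Rmult_le_reg_r with (/ d); [apply Rinv_0_lt_compat; auto|];
     replace (d * t * / d) with t by (field; lra); exact Ht).
  apply Rmult_lt_reg_r with (exp t). apply exp_pos.
  rewrite Rmult_assoc, Rinv_l by (apply Rgt_not_eq, exp_pos). nra.
Qed.

Lemma tailR f K M (Hf : contR f) : 0 <= K ->
  (forall x, M < Rabs x -> Rabs (f x) <= K * exp (- Rabs x)) ->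
  forall T w v, M < T -> 0 <= T -> T <= w -> T <= v -> Rabs (RI f w v) <= K * exp (- T).
Proof.
  intros HK Hb.
  assert (key : forall T w v, M < T -> 0 <= T -> T <= w -> w <= v -> Rabs (RI f w v) <= K * exp (- T)).
  { intros T w v HM HT Hw Hwv.
    assert (Hg : contR (fun x => K * exp (- x))) by cont.
    eapply Rle_trans. apply (RI_abs_le f (fun x => K * exp (- x)) Hf Hg); auto.
    intros x Hx. assert (Hx' : M < Rabs x) by (rewrite Rabs_right; lra).
    specialize (Hb x Hx'). rewrite (Rabs_right x) in Hb by lra. exact Hb.
    rewrite (RI_FTC (fun x => - K * exp (- x))).
    - assert (exp (- v) > 0) by apply exp_pos.
      assert (exp (- w) <= exp (- T)). { destruct (Req_dec w T). subst; lra. left; apply exp_increasing; lra. }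
      nra.
    - intros x. eapply dl_eq. dtac. simpl; ring.
    - exact Hg. }
  intros T w v HM HT Hw Hv. destruct (Rle_dec w v). apply key; auto.
  rewrite RI_swap by auto. rewrite Rabs_Ropp. apply key; lra.
Qed.

Lemma tailL f K M (Hf : contR f) : 0 <= K ->
  (forall x, M < Rabs x -> Rabs (f x) <= K * exp (- Rabs x)) ->
  forall T u w, M < T -> 0 <= T -> u <= - T -> w <= - T -> Rabs (RI f u w) <= K * exp (- T).
Proof.
  intros HK Hb.
  assert (key : forall T u w, M < T -> 0 <= T -> u <= w -> w <= - T -> Rabs (RI f u w) <= K * exp (- T)).
  { intros T u w HM HT Huw Hw.
    assert (Hg : contR (fun x => K * exp x)) by cont.
    eapply Rle_trans. apply (RI_abs_le f (fun x => K * exp x) Hf Hg); auto.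
    intros x Hx. assert (Hx' : M < Rabs x) by (rewrite Rabs_left1; lra).
    specialize (Hb x Hx'). rewrite (Rabs_left1 x) in Hb by lra. replace (- - x) with x in Hb by ring. exact Hb.
    rewrite (RI_FTC (fun x => K * exp x)).
    - assert (exp u > 0) by apply exp_pos.
      assert (exp w <= exp (- T)). { destruct (Req_dec w (- T)). subst; lra. left; apply exp_increasing; lra. }
      nra.
    - intros x. eapply dl_eq. dtac. simpl; ring.
    - exact Hg. }
  intros T u w HM HT Hu Hw. destruct (Rle_dec u w). apply key; auto.
  rewrite RI_swap by auto. rewrite Rabs_Ropp. apply key; lra.
Qed.

Lemma imp_exists f K M (Hf : contR f) :
  (forall x, M < Rabs x -> Rabs (f x) <= K * exp (- Rabs x)) -> exists l, is_improper_integral f l.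
Proof.
  intros Hb0.
  set (K' := Rabs K). set (M' := Rabs M).
  assert (Hb : forall x, M' < Rabs x -> Rabs (f x) <= K' * exp (- Rabs x)).
  { intros x Hx. eapply Rle_trans. apply Hb0. unfold M' in Hx; pose proof (Rle_abs M); lra.
    apply Rmult_le_compat_r. left; apply exp_pos. apply Rle_abs. }
  assert (HK : 0 <= K') by apply Rabs_pos. assert (HM : 0 <= M') by apply Rabs_pos.
  set (Un := fun n => RI f (- INR n) (INR n)).
  assert (Hc : Cauchy_crit Un).
  { intros e He. destruct (exp_small K' (e / 2) HK ltac:(lra)) as [T [HT0 HT]].
    destruct (INR_unbounded (Rmax T M' + 1)) as [N HN].
    exists N. intros n m Hn Hm. unfold R_dist, Un.
    assert (HNn := le_INR _ _ Hn). assert (HNm := le_INR _ _ Hm).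
    assert (HTm : T <= Rmax T M') by apply Rmax_l. assert (HMm : M' <= Rmax T M') by apply Rmax_r.
    set (S := Rmax T M' + 1).
    rewrite <- (RI_chasles f Hf (- INR n) (- INR m)), <- (RI_chasles f Hf (- INR m) (INR m) (INR n)) by auto.
    replace (RI f (- INR n) (- INR m) + (RI f (- INR m) (INR m) + RI f (INR m) (INR n)) - RI f (- INR m) (INR m))
      with (RI f (- INR n) (- INR m) + RI f (INR m) (INR n)) by ring.
    eapply Rle_lt_trans. apply Rabs_triang.
    assert (A1 := tailL f K' M' Hf HK Hb S (- INR n) (- INR m) ltac:(unfold S; lra) ltac:(unfold S; lra) ltac:(unfold S; lra) ltac:(unfold S; lra)).
    assert (A2 := tailR f K' M' Hf HK Hb S (INR m) (INR n) ltac:(unfold S; lra) ltac:(unfold S; lra) ltac:(unfold S; lra) ltac:(unfold S; lra)).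
    assert (K' * exp (- S) < e / 2) by (apply HT; unfold S; lra). lra. }
  destruct (R_complete Un Hc) as [l Hl]. exists l.
  exists (ri_of_cont f Hf). intros d Hd.
  destruct (Hl (d / 2) ltac:(lra)) as [N1 HN1].
  destruct (exp_small K' (d / 4) HK ltac:(lra)) as [T [HT0 HT]].
  set (S := Rmax T M' + 1).
  assert (HTm : T <= Rmax T M') by apply Rmax_l. assert (HMm : M' <= Rmax T M') by apply Rmax_r.
  assert (HS1 : M' < S) by (unfold S; lra). assert (HS2 : 0 <= S) by (unfold S; lra).
  assert (HS3 : T <= S) by (unfold S; lra). clearbody S.
  exists S. intros u v Hu Hv.
  destruct (INR_unbounded S) as [N2 HN2].
  set (n := max N1 N2).
  assert (Hn1 : (n >= N1)%nat) by (unfold n; lia).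
  assert (Hn2 : INR N2 <= INR n) by (apply le_INR; unfold n; lia).
  rewrite <- (RI_eq _ _ _ (ri_of_cont f Hf u v)).
  rewrite <- (RI_chasles f Hf u (- INR n)), <- (RI_chasles f Hf (- INR n) (INR n) v).
  specialize (HN1 n Hn1). unfold R_dist, Un in HN1.
  assert (A1 := tailL f K' M' Hf HK Hb S u (- INR n) ltac:(lra) ltac:(lra) ltac:(lra) ltac:(lra)).
  assert (A2 := tailR f K' M' Hf HK Hb S (INR n) v ltac:(lra) ltac:(lra) ltac:(lra) ltac:(lra)).
  assert (K' * exp (- S) < d / 4) by (apply HT; lra).
  replace (RI f u (- INR n) + (RI f (- INR n) (INR n) + RI f (INR n) v) - l)
    with (RI f u (- INR n) + RI f (INR n) v + (RI f (- INR n) (INR n) - l)) by ring.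
  eapply Rle_lt_trans. apply Rabs_triang. eapply Rle_lt_trans. apply Rplus_le_compat_r. apply Rabs_triang.
  lra.
Qed.

Lemma ImpInt_bound f K M (Hf : contR f) c Q :
  (forall x, M < Rabs x -> Rabs (f x) <= K * exp (- Rabs x)) ->
  (forall dl, 0 < dl -> exists M, forall u v, u < - M -> M < v -> Rabs (RI f u v - c) <= Q + dl) ->
  Rabs (ImpInt f - c) <= Q.
Proof.
  intros Hb H. destruct (imp_exists f K M Hf Hb) as [l Hl]. rewrite (ImpInt_eq f l Hl).
  apply imp_bound with f; auto.
Qed.

Lemma div_nonneg a b : 0 <= a -> 0 < b -> 0 <= a / b.
Proof. intros; apply Rmult_le_pos; auto; left; apply Rinv_0_lt_compat; auto. Qed.

Lemma cosh_E x : cosh x = (exp x + / exp x) / 2.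
Proof. unfold cosh. rewrite exp_Ropp. reflexivity. Qed.
Lemma sinh_E x : sinh x = (exp x - / exp x) / 2.
Proof. unfold sinh. rewrite exp_Ropp. reflexivity. Qed.

Lemma cosh_ge1 x : 1 <= cosh x.
Proof.
  rewrite cosh_E. pose proof (exp_pos x). set (E := exp x) in *.
  assert (E + / E - 2 = (E - 1) ^ 2 / E) by (field; lra).
  assert (0 <= (E - 1) ^ 2 / E) by (apply div_nonneg; [apply pow2_ge_0|lra]).
  lra.
Qed.

Lemma cosh_sinh x : cosh x ^ 2 - sinh x ^ 2 = 1.
Proof. rewrite cosh_E, sinh_E. pose proof (exp_pos x). field. lra. Qed.

Lemma sech_pos x : 0 < sech x.
Proof. unfold sech. apply Rinv_0_lt_compat, cosh_pos. Qed.
Lemma sech_le1 x : sech x <= 1.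
Proof. unfold sech. pose proof (cosh_ge1 x). rewrite <- Rinv_1. apply Rinv_le_contravar; lra. Qed.

Lemma tanh_sech x : 1 - tanh x ^ 2 = sech x ^ 2.
Proof.
  unfold tanh, sech. pose proof (cosh_pos x). pose proof (cosh_sinh x).
  assert (Hs : sinh x ^ 2 = cosh x ^ 2 - 1) by lra.
  replace ((sinh x / cosh x) ^ 2) with (sinh x ^ 2 / cosh x ^ 2) by (field; lra).
  rewrite Hs. field. lra.
Qed.

Lemma tanh_abs x : Rabs (tanh x) <= 1.
Proof.
  pose proof (tanh_sech x). pose proof (sech_pos x).
  assert (tanh x ^ 2 <= 1) by nra.
  apply Rabs_le. nra.
Qed.

Lemma d_tanh x : derivable_pt_lim tanh x (sech x ^ 2).
Proof.
  unfold tanh. eapply dl_eq. apply d_div. apply derivable_pt_lim_sinh. apply derivable_pt_lim_cosh.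
  pose proof (cosh_pos x); lra.
  unfold sech, Rsqr. pose proof (cosh_pos x). pose proof (cosh_sinh x).
  assert (Hs : sinh x * sinh x = cosh x * cosh x - 1) by (simpl in H0; lra).
  rewrite Hs. field. lra.
Qed.

Lemma exp_ge_2x t : 0 <= t -> 2 * t <= exp t.
Proof.
  intros Ht. replace t with (t / 2 + t / 2) at 2 by field. rewrite exp_plus.
  pose proof (exp_ineq1_le (t / 2)). pose proof (pow2_ge_0 (1 - t / 2)).
  set (e := exp (t / 2)) in *. nra.
Qed.

Lemma cosh_ge_exp_abs x : exp (Rabs x) / 2 <= cosh x.
Proof.
  unfold cosh. pose proof (exp_pos x). pose proof (exp_pos (- x)).
  destruct (Rle_dec 0 x). rewrite Rabs_right by lra. lra. rewrite Rabs_left by lra. lra.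
Qed.

Lemma cosh_ge_abs x : Rabs x <= cosh x.
Proof. pose proof (cosh_ge_exp_abs x). pose proof (exp_ge_2x (Rabs x) (Rabs_pos x)). lra. Qed.

Lemma cosh_double x : cosh x = 2 * cosh (x / 2) ^ 2 - 1.
Proof.
  rewrite !cosh_E. replace x with (x / 2 + x / 2) at 1 2 by field. rewrite exp_plus.
  pose proof (exp_pos (x / 2)). field. lra.
Qed.

Lemma zsech z : Rabs z * sech z ^ 2 <= 2 * sech (z / 2) ^ 2.
Proof.
  unfold sech. set (c := cosh (z / 2)).
  assert (Hc : 1 <= c) by apply cosh_ge1.
  assert (Hz : Rabs z <= 2 * c) by (pose proof (cosh_ge_abs (z / 2)); unfold c;
      unfold Rdiv in H; rewrite Rabs_mult, (Rabs_right (/ 2)) in H by lra; lra).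
  assert (Hcz : c ^ 2 <= cosh z) by (rewrite cosh_double; fold c; nra).
  assert (0 < cosh z) by apply cosh_pos.
  rewrite !pow_inv.
  apply Rle_trans with (Rabs z * / (c ^ 2) ^ 2).
  apply Rmult_le_compat_l. apply Rabs_pos. apply Rinv_le_contravar. apply pow_lt, pow_lt; lra. apply pow_incr; split; [nra|exact Hcz].
  apply Rle_trans with (2 * c * / (c ^ 2) ^ 2).
  apply Rmult_le_compat_r. left; apply Rinv_0_lt_compat; apply pow_lt, pow_lt; lra. auto.
  replace (2 * c * / (c ^ 2) ^ 2) with (2 * / c ^ 2 * / c) by (field; lra).
  assert (0 < / c ^ 2) by (apply Rinv_0_lt_compat; apply pow_lt; lra).
  assert (/ c <= 1) by (rewrite <- Rinv_1; apply Rinv_le_contravar; lra). nra.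
Qed.

Lemma zsech_bound z : Rabs (z * sech z ^ 2) <= 2.
Proof.
  rewrite Rabs_mult, (Rabs_right (sech z ^ 2)) by (apply Rle_ge, pow2_ge_0).
  pose proof (zsech z). pose proof (sech_le1 (z/2)). pose proof (sech_pos (z/2)). nra.
Qed.

Lemma one_minus_tanh y : 0 <= y -> 0 <= 1 - tanh y <= sech y ^ 2.
Proof.
  intros Hy. unfold tanh, sech. rewrite cosh_E, sinh_E.
  pose proof (exp_pos y). set (E := exp y) in *.
  assert (HE : 1 <= E) by (unfold E; pose proof (exp_ineq1_le y); lra).
  split.
  - assert (1 - (E - / E) / 2 / ((E + / E) / 2) = 2 / (E * E + 1)) by (field; nra).
    rewrite H0. apply div_nonneg; nra.
  - assert (1 - (E - / E) / 2 / ((E + / E) / 2) = 2 / (E * E + 1)) by (field; nra).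
    rewrite H0. replace ((/ ((E + / E) / 2)) ^ 2) with (4 * (E * E) / ((E * E + 1) * (E * E + 1))) by (field; nra).
    apply Rmult_le_reg_r with ((E * E + 1) * (E * E + 1)). nra.
    field_simplify; nra.
Qed.

Lemma one_plus_tanh y : y <= 0 -> 0 <= 1 + tanh y <= sech y ^ 2.
Proof.
  intros Hy. assert (tanh y = - tanh (- y)).
  { unfold tanh, sinh, cosh. rewrite Ropp_involutive. field. pose proof (exp_pos y); pose proof (exp_pos (-y)); lra. }
  assert (sech y = sech (- y)) by (unfold sech, cosh; rewrite Ropp_involutive; f_equal; field).
  rewrite H, H0. pose proof (one_minus_tanh (- y) ltac:(lra)). lra.
Qed.

Lemma sech_small dl : 0 < dl -> exists Y, 0 < Y /\ forall y, Y <= Rabs y -> sech y ^ 2 <= dl.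
Proof.
  intros Hd. exists (/ dl + 1). split. assert (0 < / dl) by (apply Rinv_0_lt_compat; auto). lra.
  intros y Hy. pose proof (sech_pos y). pose proof (sech_le1 y).
  assert (sech y <= dl).
  { unfold sech. pose proof (cosh_ge_abs y). assert (0 < / dl) by (apply Rinv_0_lt_compat; auto).
    replace dl with (/ / dl) by (field; lra). apply Rinv_le_contravar; lra. }
  nra.
Qed.

Lemma d_tanh_aff c a x : derivable_pt_lim (fun y => tanh (c * (y - a)) / c) x (sech (c * (x - a)) ^ 2) \/ c = 0.
Proof.
  destruct (Req_dec c 0) as [h|h]; [right; auto|left].
  unfold Rdiv. eapply dl_eq. apply d_mult. apply (d_comp tanh (fun y => c * (y - a))). dtac. apply d_tanh. apply d_const.
  cbv beta. field. auto.
Qed.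

Lemma W2_int c a (Hc : 0 < c) u v :
  RI (fun x => sech (c * (x - a)) ^ 2) u v = (tanh (c * (v - a)) - tanh (c * (u - a))) / c.
Proof.
  rewrite (RI_FTC (fun y => tanh (c * (y - a)) / c)).
  field; lra.
  intros x. destruct (d_tanh_aff c a x); [auto|lra].
  cont.
Qed.

Definition G4 t := tanh t - tanh t ^ 3 / 3.

Lemma W4_int c a (Hc : 0 < c) u v :
  RI (fun x => sech (c * (x - a)) ^ 4) u v = (G4 (c * (v - a)) - G4 (c * (u - a))) / c.
Proof.
  rewrite (RI_FTC (fun y => G4 (c * (y - a)) / c)).
  field; lra.
  intros x. unfold G4, Rdiv. eapply dl_eq.
  apply d_mult; [|apply d_const].
  apply d_minus. apply (d_comp tanh (fun y => c * (y - a))). dtac. apply d_tanh.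
  apply d_mult; [|apply d_const]. apply (d_comp (fun t => t ^ 3) (fun y => tanh (c * (y - a)))).
  apply (d_comp tanh (fun y => c * (y - a))). dtac. apply d_tanh. apply derivable_pt_lim_pow.
  cbv beta. replace (sech (c * (x - a)) ^ 4) with ((sech (c * (x - a)) ^ 2) ^ 2) by ring.
  rewrite <- (tanh_sech (c * (x - a))). replace (INR 3) with 3 by (simpl; ring). simpl. field. lra.
  cont.
Qed.

Lemma tanh_ends c a (Hc : 0 < c) dl : 0 < dl -> exists M, forall u v, u < - M -> M < v ->
  (0 <= 1 - tanh (c * (v - a)) <= dl) /\ (0 <= 1 + tanh (c * (u - a)) <= dl).
Proof.
  intros Hd. destruct (sech_small dl Hd) as [Y [HY H]].
  exists (Rabs a + Y / c). intros u v Hu Hv.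
  assert (0 < Y / c) by (apply Rdiv_lt_0_compat; lra).
  pose proof (Rle_abs a). pose proof (Rle_abs (- a)). rewrite Rabs_Ropp in H2.
  assert (Hv1 : Y / c <= v - a) by lra. assert (Hu1 : Y / c <= a - u) by lra.
  assert (Hv2 : Y <= c * (v - a)).
  { apply Rmult_le_reg_l with (/ c). apply Rinv_0_lt_compat; auto.
    replace (/ c * (c * (v - a))) with (v - a) by (field; lra). unfold Rdiv in Hv1. lra. }
  assert (Hu2 : Y <= - (c * (u - a))).
  { apply Rmult_le_reg_l with (/ c). apply Rinv_0_lt_compat; auto.
    replace (/ c * - (c * (u - a))) with (a - u) by (field; lra). unfold Rdiv in Hu1. lra. }
  split.
  - pose proof (one_minus_tanh (c * (v - a)) ltac:(lra)).
    assert (sech (c * (v - a)) ^ 2 <= dl) by (apply H; rewrite Rabs_right; lra). lra.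
  - pose proof (one_plus_tanh (c * (u - a)) ltac:(lra)).
    assert (sech (c * (u - a)) ^ 2 <= dl) by (apply H; rewrite Rabs_left1; lra). lra.
Qed.

Lemma W2_lim c a (Hc : 0 < c) dl : 0 < dl -> exists M, forall u v, u < - M -> M < v ->
  Rabs (RI (fun x => sech (c * (x - a)) ^ 2) u v - 2 / c) <= dl.
Proof.
  intros Hd. destruct (tanh_ends c a Hc (dl * c / 2)) as [M H]. pose proof (Rmult_lt_0_compat dl c Hd Hc); lra.
  exists M. intros u v Hu Hv. destruct (H u v Hu Hv) as [H1 H2]. rewrite W2_int by auto.
  replace ((tanh (c * (v - a)) - tanh (c * (u - a))) / c - 2 / c) with
    (- ((1 - tanh (c * (v - a))) + (1 + tanh (c * (u - a)))) / c) by (field; lra).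
  unfold Rdiv. rewrite Rabs_mult, (Rabs_right (/ c)) by (apply Rle_ge; left; apply Rinv_0_lt_compat; auto).
  rewrite Rabs_Ropp, Rabs_right by lra.
  apply Rmult_le_reg_r with c; auto. rewrite Rmult_assoc, Rinv_l by lra. lra.
Qed.

Lemma G4_p t : Rabs (G4 t - 2 / 3) <= 2 * (1 - tanh t).
Proof.
  unfold G4. pose proof (tanh_abs t). apply Rabs_le_inv in H. set (T := tanh t) in *.
  replace (T - T ^ 3 / 3 - 2 / 3) with (- ((1 - T) * ((1 - T) * (2 + T))) / 3) by field.
  assert (0 <= (1 - T) * (2 + T) <= 3) by nra.
  assert (0 <= 1 - T) by lra.
  apply Rabs_le. split; nra.
Qed.

Lemma G4_m t : Rabs (G4 t + 2 / 3) <= 2 * (1 + tanh t).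
Proof.
  unfold G4. pose proof (tanh_abs t). apply Rabs_le_inv in H. set (T := tanh t) in *.
  replace (T - T ^ 3 / 3 + 2 / 3) with (((1 + T) * ((1 + T) * (2 - T))) / 3) by field.
  assert (0 <= (1 + T) * (2 - T) <= 3) by nra.
  assert (0 <= 1 + T) by lra.
  apply Rabs_le. split; nra.
Qed.

Lemma W4_lim c a (Hc : 0 < c) dl : 0 < dl -> exists M, forall u v, u < - M -> M < v ->
  Rabs (RI (fun x => sech (c * (x - a)) ^ 4) u v - 4 / (3 * c)) <= dl.
Proof.
  intros Hd. destruct (tanh_ends c a Hc (dl * c / 4)) as [M H]. pose proof (Rmult_lt_0_compat dl c Hd Hc); lra.
  exists M. intros u v Hu Hv. destruct (H u v Hu Hv) as [H1 H2]. rewrite W4_int by auto.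
  pose proof (G4_p (c * (v - a))). pose proof (G4_m (c * (u - a))).
  replace ((G4 (c * (v - a)) - G4 (c * (u - a))) / c - 4 / (3 * c)) with
    (((G4 (c * (v - a)) - 2 / 3) - (G4 (c * (u - a)) + 2 / 3)) / c) by (field; lra).
  unfold Rdiv. rewrite Rabs_mult, (Rabs_right (/ c)) by (apply Rle_ge; left; apply Rinv_0_lt_compat; auto).
  apply Rmult_le_reg_r with c; auto. rewrite Rmult_assoc, Rinv_l by lra. rewrite Rmult_1_r.
  eapply Rle_trans. apply Rabs_triang. rewrite Rabs_Ropp. lra.
Qed.

Lemma W2_le c a (Hc : 0 < c) u v : u <= v ->
  0 <= RI (fun x => sech (c * (x - a)) ^ 2) u v <= 2 / c.
Proof.
  intros Huv. rewrite W2_int by auto.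
  pose proof (tanh_abs (c * (v - a))). pose proof (tanh_abs (c * (u - a))).
  apply Rabs_le_inv in H. apply Rabs_le_inv in H0.
  assert (tanh (c * (u - a)) <= tanh (c * (v - a))).
  { assert (0 <= RI (fun x => sech (c * (x - a)) ^ 2) u v).
    { apply Rle_trans with (RI (fun _ => 0) u v).
      rewrite (RI_FTC (fun _ => 0)). lra. intros; apply d_const. cont.
      apply RI_le; auto. cont. cont. intros. apply pow2_ge_0. }
    rewrite W2_int in H1 by auto. unfold Rdiv in H1.
    assert (0 < / c) by (apply Rinv_0_lt_compat; auto). nra. }
  assert (0 < / c) by (apply Rinv_0_lt_compat; auto).
  unfold Rdiv. split; nra.
Qed.

Definition p0 x := (1 - x ^ 2 + Rabs (1 - x ^ 2)) / 2.

Lemma p0_cont : contR p0.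
Proof. unfold p0. cont. Qed.

Lemma p0_pos x : 0 <= 1 - x ^ 2 -> p0 x = 1 - x ^ 2.
Proof. intros H. unfold p0. rewrite Rabs_right by lra. field. Qed.
Lemma p0_neg x : 1 - x ^ 2 <= 0 -> p0 x = 0.
Proof. intros H. unfold p0. rewrite Rabs_left1 by lra. field. Qed.

Lemma eta0_sq x : eta0 x ^ 2 = p0 x.
Proof.
  unfold eta0. destruct (Rlt_dec (Rabs x) 1).
  - assert (0 <= 1 - x ^ 2).
    { pose proof (Rabs_pos x). rewrite <- (pow2_abs x). nra. }
    rewrite pow2_sqrt by auto. rewrite p0_pos; auto.
  - assert (1 - x ^ 2 <= 0). { rewrite <- (pow2_abs x). nra. }
    rewrite p0_neg; auto. ring.
Qed.

Lemma p0_range x : 0 <= p0 x <= 1.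
Proof.
  destruct (Rle_dec 0 (1 - x ^ 2)). rewrite p0_pos by auto. pose proof (pow2_ge_0 x). lra.
  rewrite p0_neg by lra. lra.
Qed.

Lemma eta0_abs x : Rabs (eta0 x) <= 1.
Proof.
  pose proof (eta0_sq x). pose proof (p0_range x). rewrite <- (pow2_abs) in H.
  pose proof (Rabs_pos (eta0 x)). nra.
Qed.

Lemma p0_lip a x : -1 < a < 1 -> Rabs (p0 x - (1 - a ^ 2)) <= 2 * Rabs (x - a).
Proof.
  intros Ha. destruct (Rle_dec 0 (1 - x ^ 2)).
  - rewrite p0_pos by auto. replace (1 - x ^ 2 - (1 - a ^ 2)) with ((a - x) * (a + x)) by ring.
    rewrite Rabs_mult. rewrite <- Rabs_Ropp. replace (- (a - x)) with (x - a) by ring.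
    rewrite Rmult_comm. apply Rmult_le_compat_r. apply Rabs_pos.
    apply Rabs_le. nra.
  - rewrite p0_neg by lra. rewrite Rminus_0_l, Rabs_Ropp, Rabs_right by nra.
    destruct (Rle_dec x a).
    + rewrite Rabs_left1 by lra. assert (x < -1) by nra. nra.
    + rewrite Rabs_right by lra. assert (1 < x) by nra. nra.
Qed.

Definition good (e e1 e2 : R -> R) (eps C r : R) : Prop :=
  (forall x, derivable_pt_lim e x (e1 x)) /\ (forall x, derivable_pt_lim e1 x (e2 x)) /\ contR e2 /\
  (forall x, eps ^ 2 * e2 x + (1 - x ^ 2 - e x ^ 2) * e x = 0) /\
  (exists M, forall x, M < Rabs x -> Rabs (e x) * exp (Rabs x) < 1) /\
  (forall x, Rabs (e x - eta0 x) <= C * r /\ Rabs (e1 x) <= C * / r) /\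
  0 < C /\ 0 < r <= 1 /\ 0 < eps.

Lemma good_cont e e1 e2 eps C r : good e e1 e2 eps C r -> contR e /\ contR e1 /\ contR e2.
Proof.
  intros (H1 & H2 & H3 & _). split. apply (dcont _ _ H1). split. apply (dcont _ _ H2). auto.
Qed.

Lemma good_bound e e1 e2 eps C r : good e e1 e2 eps C r -> forall x, Rabs (e x) <= 1 + C.
Proof.
  intros (_ & _ & _ & _ & _ & H & HC & Hr & _) x. destruct (H x) as [H1 _].
  pose proof (eta0_abs x). pose proof (Rabs_triang (e x - eta0 x) (eta0 x)).
  replace (e x - eta0 x + eta0 x) with (e x) in H2 by ring. nra.
Qed.

Lemma good_sq e e1 e2 eps C r : good e e1 e2 eps C r -> forall x,
  Rabs (e x ^ 2 - p0 x) <= C * (2 + C) * r.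
Proof.
  intros Hg x. pose proof (good_bound _ _ _ _ _ _ Hg x) as Hb.
  destruct Hg as (_ & _ & _ & _ & _ & H & HC & Hr & _). destruct (H x) as [H1 _].
  rewrite <- eta0_sq. replace (e x ^ 2 - eta0 x ^ 2) with ((e x - eta0 x) * (e x + eta0 x)) by ring.
  rewrite Rabs_mult. pose proof (eta0_abs x). pose proof (Rabs_triang (e x) (eta0 x)).
  apply Rle_trans with ((C * r) * (2 + C)). apply Rmult_le_compat; auto using Rabs_pos. lra.
  lra.
Qed.

Lemma good_4 e e1 e2 eps C r : good e e1 e2 eps C r -> forall x,
  Rabs (e x ^ 4 - p0 x ^ 2) <= C * (2 + C) * r * ((1 + C) ^ 2 + 1).
Proof.
  intros Hg x. pose proof (good_bound _ _ _ _ _ _ Hg x). pose proof (good_sq _ _ _ _ _ _ Hg x).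
  pose proof (p0_range x).
  replace (e x ^ 4 - p0 x ^ 2) with ((e x ^ 2 - p0 x) * (e x ^ 2 + p0 x)) by ring.
  rewrite Rabs_mult. apply Rmult_le_compat; auto using Rabs_pos.
  rewrite Rabs_right. rewrite <- (pow2_abs (e x)).
  assert (Rabs (e x) ^ 2 <= (1 + C) ^ 2) by (apply pow_incr; split; auto using Rabs_pos). lra.
  pose proof (pow2_ge_0 (e x)). lra.
Qed.

Lemma RI_const k u v : RI (fun _ => k) u v = k * (v - u).
Proof. rewrite (RI_FTC (fun x => k * x)). ring. intros x. eapply dl_eq. dtac. cbv beta; ring. cont. Qed.

Lemma RI_scal l g (Hg : contR g) u v : RI (fun x => l * g x) u v = l * RI g u v.
Proof.
  rewrite (RI_ext _ (fun x => (fun _ => 0) x + l * g x)) by (intros; ring).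
  rewrite RI_lin; [|cont|auto]. rewrite RI_const. ring.
Qed.

Lemma xsech c a x : 0 < c -> Rabs (x - a) * sech (c * (x - a)) ^ 2 <= 2 / c * sech (c / 2 * (x - a)) ^ 2.
Proof.
  intros Hc. pose proof (zsech (c * (x - a))).
  rewrite Rabs_mult, (Rabs_right c) in H by lra.
  replace (c * (x - a) / 2) with (c / 2 * (x - a)) in H by field.
  apply Rmult_le_reg_l with c; auto.
  replace (c * (2 / c * sech (c / 2 * (x - a)) ^ 2)) with (2 * sech (c / 2 * (x - a)) ^ 2) by (field; lra).
  lra.
Qed.

Lemma weighted g w c a q A L (Hg : contR g) (Hw : contR w) (Hc : 0 < c) (HA : 0 <= A) (HL : 0 <= L) :
  (forall x, Rabs (g x - q) <= A + L * Rabs (x - a)) ->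
  (forall x, 0 <= w x <= sech (c * (x - a)) ^ 2) ->
  forall u v, u <= v -> Rabs (RI (fun x => g x * w x) u v - q * RI w u v) <= 2 * A / c + 8 * L / c ^ 2.
Proof.
  intros H1 H2 u v Huv.
  replace (RI (fun x => g x * w x) u v - q * RI w u v) with (RI (fun x => g x * w x + - q * w x) u v)
    by (rewrite RI_lin by cont; ring).
  assert (Hc2 : 0 < c / 2) by lra.
  eapply Rle_trans. apply (RI_abs_le _ (fun x => A * sech (c * (x - a)) ^ 2 + (2 * L / c) * sech (c / 2 * (x - a)) ^ 2)); auto.
  cont. cont.
  - intros x _. replace (g x * w x + - q * w x) with ((g x - q) * w x) by ring.
    rewrite Rabs_mult, (Rabs_right (w x)) by (apply Rle_ge; apply H2).
    specialize (H1 x). destruct (H2 x). pose proof (xsech c a x Hc).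
    apply Rle_trans with ((A + L * Rabs (x - a)) * w x). apply Rmult_le_compat_r; auto.
    apply Rle_trans with (A * sech (c * (x - a)) ^ 2 + L * (Rabs (x - a) * sech (c * (x - a)) ^ 2)).
    pose proof (Rabs_pos (x - a)).
    replace ((A + L * Rabs (x - a)) * w x) with (A * w x + L * (Rabs (x - a) * w x)) by ring.
    apply Rplus_le_compat; apply Rmult_le_compat_l; auto. apply Rmult_le_compat_l; auto.
    apply Rplus_le_compat_l. replace (2 * L / c * sech (c / 2 * (x - a)) ^ 2) with (L * (2 / c * sech (c / 2 * (x - a)) ^ 2)) by (field; lra).
    apply Rmult_le_compat_l; auto.
  - rewrite RI_lin by cont. rewrite RI_scal by cont.
    destruct (W2_le c a Hc u v Huv). destruct (W2_le (c / 2) a Hc2 u v Huv).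
    assert (0 <= 2 * L / c) by (apply div_nonneg; lra).
    apply Rle_trans with (A * (2 / c) + 2 * L / c * (2 / (c / 2))).
    apply Rplus_le_compat; apply Rmult_le_compat_l; auto.
    right; field; lra.
Qed.

Lemma imp_weighted g w c a q A L m (Hg : contR g) (Hw : contR w) (Hc : 0 < c) (HA : 0 <= A) (HL : 0 <= L) :
  Rabs q <= 1 ->
  (forall dl, 0 < dl -> exists M, forall u v, u < - M -> M < v -> Rabs (RI w u v - m) <= dl) ->
  (exists M K, forall x, M < Rabs x -> Rabs (g x * w x) <= K * exp (- Rabs x)) ->
  (forall x, Rabs (g x - q) <= A + L * Rabs (x - a)) ->
  (forall x, 0 <= w x <= sech (c * (x - a)) ^ 2) ->
  Rabs (ImpInt (fun x => g x * w x) - q * m) <= 2 * A / c + 8 * L / c ^ 2.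
Proof.
  intros Hq Hlim [M [K Hdec]] H1 H2.
  apply (ImpInt_bound _ K M); [cont|auto|].
  intros dl Hdl. destruct (Hlim dl Hdl) as [M1 HM1]. exists (Rabs M1). intros u v Hu Hv.
  pose proof (Rle_abs M1). pose proof (Rabs_pos M1).
  assert (Huv : u <= v) by lra.
  assert (Hu' : u < - M1) by lra. assert (Hv' : M1 < v) by lra. clear Hu Hv.
  pose proof (weighted g w c a q A L Hg Hw Hc HA HL H1 H2 u v Huv).
  specialize (HM1 u v Hu' Hv').
  replace (RI (fun x => g x * w x) u v - q * m) with ((RI (fun x => g x * w x) u v - q * RI w u v) + q * (RI w u v - m)) by ring.
  eapply Rle_trans. apply Rabs_triang. rewrite Rabs_mult.
  assert (Rabs q * Rabs (RI w u v - m) <= dl).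
  { apply Rle_trans with (1 * dl). apply Rmult_le_compat; auto using Rabs_pos. lra. }
  lra.
Qed.

Lemma pow_abs_le1 y n : Rabs y <= 1 -> (1 <= n)%nat -> Rabs (y ^ n) <= Rabs y.
Proof.
  intros H Hn. rewrite <- RPow_abs. destruct n. lia. simpl.
  apply Rle_trans with (Rabs y * 1); [|lra]. apply Rmult_le_compat_l. apply Rabs_pos.
  rewrite <- (pow1 n). apply pow_incr. split; auto using Rabs_pos.
Qed.

Lemma decay_gen (e g : R -> R) n :
  (exists M, forall x, M < Rabs x -> Rabs (e x) * exp (Rabs x) < 1) ->
  (forall x, Rabs (g x) <= 2) -> (1 <= n)%nat ->
  exists M K, forall x, M < Rabs x -> Rabs (e x ^ n * g x) <= K * exp (- Rabs x).
Proof.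
  intros [M HM] Hg Hn. exists M, 2. intros x Hx. specialize (HM x Hx).
  assert (He : Rabs (e x) <= exp (- Rabs x)).
  { rewrite exp_Ropp. pose proof (exp_pos (Rabs x)).
    apply Rmult_le_reg_r with (exp (Rabs x)); auto. rewrite Rinv_l by lra. lra. }
  assert (exp (- Rabs x) <= 1). { rewrite <- exp_0. destruct (Req_dec (Rabs x) 0). rewrite H, Ropp_0; lra.
    left; apply exp_increasing. pose proof (Rabs_pos x); lra. }
  rewrite Rabs_mult. pose proof (pow_abs_le1 (e x) n ltac:(lra) Hn).
  pose proof (exp_pos (- Rabs x)). specialize (Hg x).
  rewrite Rmult_comm. apply Rmult_le_compat; auto using Rabs_pos. lra.
Qed.

Lemma q_abs a : -1 < a < 1 -> Rabs (1 - a ^ 2) <= 1.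
Proof. intros. apply Rabs_le. pose proof (pow2_ge_0 a). nra. Qed.

Lemma sech_sq_abs y : Rabs (sech y ^ 2) <= 2.
Proof. rewrite Rabs_right by (apply Rle_ge, pow2_ge_0). pose proof (sech_le1 y). pose proof (sech_pos y). nra. Qed.
Lemma sech_4_abs y : Rabs (sech y ^ 4) <= 2.
Proof. rewrite Rabs_right by (apply Rle_ge; replace (sech y ^ 4) with ((sech y ^ 2) ^ 2) by ring; apply pow2_ge_0).
  pose proof (sech_le1 y). pose proof (sech_pos y).
  assert (sech y ^ 2 <= 1) by nra. replace (sech y ^ 4) with ((sech y ^ 2) ^ 2) by ring. nra. Qed.
Lemma sech_4_le y : 0 <= sech y ^ 4 <= sech y ^ 2.
Proof. pose proof (sech_le1 y). pose proof (sech_pos y). assert (0 <= sech y ^ 2 <= 1) by nra.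
  replace (sech y ^ 4) with ((sech y ^ 2) ^ 2) by ring. nra. Qed.

Lemma g2_pt e e1 e2 eps C r a : good e e1 e2 eps C r -> -1 < a < 1 -> forall x,
  Rabs (e x ^ 2 - (1 - a ^ 2)) <= C * (2 + C) * r + 2 * Rabs (x - a).
Proof.
  intros Hg Ha x. pose proof (good_sq _ _ _ _ _ _ Hg x). pose proof (p0_lip a x Ha).
  replace (e x ^ 2 - (1 - a ^ 2)) with ((e x ^ 2 - p0 x) + (p0 x - (1 - a ^ 2))) by ring.
  eapply Rle_trans. apply Rabs_triang. lra.
Qed.

Lemma g4_pt e e1 e2 eps C r a : good e e1 e2 eps C r -> -1 < a < 1 -> forall x,
  Rabs (e x ^ 4 - (1 - a ^ 2) ^ 2) <= C * (2 + C) * r * ((1 + C) ^ 2 + 1) + 4 * Rabs (x - a).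
Proof.
  intros Hg Ha x. pose proof (good_4 _ _ _ _ _ _ Hg x). pose proof (p0_lip a x Ha).
  replace (e x ^ 4 - (1 - a ^ 2) ^ 2) with ((e x ^ 4 - p0 x ^ 2) + (p0 x - (1 - a ^ 2)) * (p0 x + (1 - a ^ 2))) by ring.
  eapply Rle_trans. apply Rabs_triang. apply Rplus_le_compat. auto.
  rewrite Rabs_mult. pose proof (p0_range x). pose proof (pow2_ge_0 a).
  assert (Rabs (p0 x + (1 - a ^ 2)) <= 2) by (apply Rabs_le; nra).
  apply Rle_trans with (2 * Rabs (x - a) * 2). apply Rmult_le_compat; auto using Rabs_pos. lra.
Qed.


Lemma term2 e e1 e2 eps C r a c : good e e1 e2 eps C r -> -1 < a < 1 -> 0 < c ->
  Rabs (ImpInt (fun x => e x ^ 2 * sech (c * (x - a)) ^ 2) - (1 - a ^ 2) * (2 / c))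
    <= 2 * (C * (2 + C) * r) / c + 8 * 2 / c ^ 2.
Proof.
  intros Hg Ha Hc. destruct (good_cont _ _ _ _ _ _ Hg) as (He & He1 & He2).
  pose proof Hg as (_ & _ & _ & _ & Hdec & _ & HC & Hr & Heps).
  apply (imp_weighted (fun x => e x ^ 2) (fun x => sech (c * (x - a)) ^ 2) c a); auto.
  cont. cont. apply Rmult_le_pos; [apply Rmult_le_pos|]; lra. lra. apply q_abs; auto.
  intros; apply W2_lim; auto.
  apply decay_gen; auto. intros; apply sech_sq_abs.
  apply g2_pt with e1 e2 eps; auto.
  intros; split. apply pow2_ge_0. lra.
Qed.

Lemma term4 e e1 e2 eps C r a c : good e e1 e2 eps C r -> -1 < a < 1 -> 0 < c ->
  Rabs (ImpInt (fun x => e x ^ 2 * sech (c * (x - a)) ^ 4) - (1 - a ^ 2) * (4 / (3 * c)))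
    <= 2 * (C * (2 + C) * r) / c + 8 * 2 / c ^ 2.
Proof.
  intros Hg Ha Hc. destruct (good_cont _ _ _ _ _ _ Hg) as (He & He1 & He2).
  pose proof Hg as (_ & _ & _ & _ & Hdec & _ & HC & Hr & Heps).
  apply (imp_weighted (fun x => e x ^ 2) (fun x => sech (c * (x - a)) ^ 4) c a); auto.
  cont. cont. apply Rmult_le_pos; [apply Rmult_le_pos|]; lra. lra. apply q_abs; auto.
  intros; apply W4_lim; auto.
  apply decay_gen; auto. intros; apply sech_4_abs.
  apply g2_pt with e1 e2 eps; auto.
  intros; apply sech_4_le.
Qed.

Lemma term5 e e1 e2 eps C r a c : good e e1 e2 eps C r -> -1 < a < 1 -> 0 < c ->
  Rabs (ImpInt (fun x => e x ^ 4 * sech (c * (x - a)) ^ 4) - (1 - a ^ 2) ^ 2 * (4 / (3 * c)))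
    <= 2 * (C * (2 + C) * r * ((1 + C) ^ 2 + 1)) / c + 8 * 4 / c ^ 2.
Proof.
  intros Hg Ha Hc. destruct (good_cont _ _ _ _ _ _ Hg) as (He & He1 & He2).
  pose proof Hg as (_ & _ & _ & _ & Hdec & _ & HC & Hr & Heps).
  apply (imp_weighted (fun x => e x ^ 4) (fun x => sech (c * (x - a)) ^ 4) c a); auto.
  cont. cont. apply Rmult_le_pos; [apply Rmult_le_pos; [apply Rmult_le_pos|]|]; try lra.
  pose proof (pow2_ge_0 (1 + C)); lra. lra.
  rewrite <- RPow_abs. pose proof (q_abs a Ha). pose proof (Rabs_pos (1 - a ^ 2)). nra.
  intros; apply W4_lim; auto.
  apply decay_gen; auto. intros; apply sech_4_abs.
  apply g4_pt with e1 e2 eps; auto.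
  intros; apply sech_4_le.
Qed.

Lemma term3 e e1 e2 eps C r a c : good e e1 e2 eps C r -> -1 < a < 1 -> 0 < c ->
  Rabs (ImpInt (fun x => e x ^ 2 * (c * (x - a)) * sech (c * (x - a)) ^ 2))
    <= 8 * (1 + C) ^ 2 / c.
Proof.
  intros Hg Ha Hc. destruct (good_cont _ _ _ _ _ _ Hg) as (He & He1 & He2).
  pose proof Hg as (_ & _ & _ & _ & Hdec & _ & HC & Hr & Heps).
  destruct (decay_gen e (fun x => c * (x - a) * sech (c * (x - a)) ^ 2) 2 Hdec) as [M [K HMK]].
  intros; apply zsech_bound. lia.
  rewrite <- (Rminus_0_r (ImpInt _)).
  apply (ImpInt_bound _ K M). cont.
  intros x Hx. rewrite Rmult_assoc. auto.
  intros dl Hdl. exists 0. intros u v Hu Hv. rewrite Rminus_0_r.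
  assert (Hc2 : 0 < c / 2) by lra.
  eapply Rle_trans. apply (RI_abs_le _ (fun x => (1 + C) ^ 2 * 2 * sech (c / 2 * (x - a)) ^ 2)). cont. cont. lra.
  - intros x _. pose proof (good_bound _ _ _ _ _ _ Hg x).
    pose proof (zsech (c * (x - a))). replace (c * (x - a) / 2) with (c / 2 * (x - a)) in H0 by field.
    rewrite (Rabs_mult (e x ^ 2 * _)), (Rabs_mult (e x ^ 2)). rewrite <- RPow_abs. rewrite (Rabs_right (sech _ ^ 2)) by (apply Rle_ge, pow2_ge_0).
    assert (Rabs (e x) ^ 2 <= (1 + C) ^ 2) by (apply pow_incr; split; auto using Rabs_pos).
    pose proof (pow2_ge_0 (Rabs (e x))).
    assert (0 <= Rabs (c * (x - a)) * sech (c * (x - a)) ^ 2) by (apply Rmult_le_pos; auto using Rabs_pos, pow2_ge_0).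
    rewrite Rmult_assoc. rewrite (Rmult_assoc ((1 + C) ^ 2)). apply Rmult_le_compat; auto.
  - rewrite RI_scal by cont. destruct (W2_le (c / 2) a Hc2 u v ltac:(lra)).
    pose proof (pow2_ge_0 (1 + C)).
    apply Rle_trans with ((1 + C) ^ 2 * 2 * (2 / (c / 2))). apply Rmult_le_compat_l; nra.
    replace ((1 + C) ^ 2 * 2 * (2 / (c / 2))) with (8 * (1 + C) ^ 2 / c) by (field; lra). lra.
Qed.

Lemma RI_zero f (Hf : contR f) u v : u <= v -> (forall x, u <= x <= v -> f x = 0) -> RI f u v = 0.
Proof.
  intros Huv H. assert (Rabs (RI f u v) <= RI (fun _ => 0) u v).
  apply RI_abs_le; auto. cont. intros x Hx. rewrite H by auto. rewrite Rabs_R0; lra.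
  rewrite RI_const in H0. pose proof (Rabs_pos (RI f u v)).
  destruct (Req_dec (RI f u v) 0); auto. assert (0 < Rabs (RI f u v)) by (apply Rabs_pos_lt; auto). lra.
Qed.

Lemma tail_deriv e e1 e2 eps C r : good e e1 e2 eps C r -> forall x,
  derivable_pt_lim (fun y => eps ^ 2 * e y * e1 y) x (eps ^ 2 * (e1 x * e1 x + e x * e2 x)).
Proof.
  intros Hg x. destruct Hg as (Hd & Hd1 & _). eapply dl_eq.
  apply d_mult. apply d_mult. apply d_const. apply Hd. apply Hd1. cbv beta. ring.
Qed.

Lemma tail_pt e e1 e2 eps C r : good e e1 e2 eps C r -> forall x, 2 <= Rabs x ->
  3 * e x ^ 2 <= eps ^ 2 * (e1 x * e1 x + e x * e2 x).
Proof.
  intros Hg x Hx. destruct Hg as (_ & _ & _ & Hode & _).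
  specialize (Hode x).
  assert (Hx2 : 4 <= x ^ 2) by (rewrite <- (pow2_abs x); nra).
  assert (eps ^ 2 * (e x * e2 x) = (x ^ 2 - 1 + e x ^ 2) * e x ^ 2).
  { replace (eps ^ 2 * (e x * e2 x)) with (e x * (eps ^ 2 * e2 x)) by ring.
    replace (eps ^ 2 * e2 x) with (- ((1 - x ^ 2 - e x ^ 2) * e x)) by lra. ring. }
  pose proof (pow2_ge_0 (e x)). pose proof (pow2_ge_0 (e1 x)). pose proof (pow2_ge_0 eps).
  assert (0 <= eps ^ 2 * (e1 x * e1 x)) by (apply Rmult_le_pos; simpl in *; nra).
  assert (3 * e x ^ 2 <= (x ^ 2 - 1 + e x ^ 2) * e x ^ 2) by nra.
  lra.
Qed.


Lemma tail_bound e e1 e2 eps C r c a : good e e1 e2 eps C r -> forall u v, u <= v ->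
  (forall x, u <= x <= v -> 2 <= Rabs x) ->
  Rabs (RI (fun x => e x ^ 2 * tanh (c * (x - a))) u v) <= 2 / 3 * (eps ^ 2 * (1 + C) * (C * / r)).
Proof.
  intros Hg u v Huv Hx. destruct (good_cont _ _ _ _ _ _ Hg) as (He & He1 & He2).
  pose proof (good_bound _ _ _ _ _ _ Hg) as Hb.
  pose proof Hg as (_ & _ & _ & _ & _ & Hgl & HC & Hr & Heps).
  eapply Rle_trans. apply (RI_abs_le _ (fun x => / 3 * (eps ^ 2 * (e1 x * e1 x + e x * e2 x)))); auto. cont. cont.
  - intros x Hxx. pose proof (tail_pt _ _ _ _ _ _ Hg x (Hx x Hxx)).
    rewrite Rabs_mult, <- RPow_abs, (pow2_abs (e x)). pose proof (tanh_abs (c * (x - a))).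
    pose proof (pow2_ge_0 (e x)). nra.
  - rewrite RI_scal by cont. rewrite (RI_FTC _ _ (tail_deriv _ _ _ _ _ _ Hg)) by cont.
    assert (forall y, Rabs (eps ^ 2 * e y * e1 y) <= eps ^ 2 * (1 + C) * (C * / r)).
    { intros y. rewrite !Rabs_mult. rewrite (Rabs_right (eps ^ 2)) by (apply Rle_ge, pow2_ge_0).
      apply Rmult_le_compat; auto using Rabs_pos. apply Rmult_le_pos; [apply pow2_ge_0|apply Rabs_pos].
      apply Rmult_le_compat_l. apply pow2_ge_0. auto. apply Hgl. }
    pose proof (H v). pose proof (H u). apply Rabs_le_inv in H0. apply Rabs_le_inv in H1. lra.
Qed.

Definition F0 x := x - x ^ 3 / 3.
Lemma RI_poly u v : RI (fun x => 1 - x ^ 2) u v = F0 v - F0 u.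
Proof.
  unfold F0. rewrite (RI_FTC (fun x => x - x ^ 3 / 3)). ring.
  intros x. unfold Rdiv. eapply dl_eq. dtac. cbv beta. simpl. field. cont.
Qed.

Lemma mid_left c a : 0 < c -> -1 < a < 1 ->
  Rabs (RI (fun x => p0 x * tanh (c * (x - a))) (-1) a + (F0 a - F0 (-1))) <= 2 / c.
Proof.
  intros Hc Ha. rewrite <- RI_poly. rewrite <- (Rmult_1_l (RI (fun x => 1 - x ^ 2) _ _)).
  rewrite <- RI_lin by (pose proof p0_cont; cont).
  eapply Rle_trans. apply (RI_abs_le _ (fun x => sech (c * (x - a)) ^ 2)). pose proof p0_cont; cont. cont. lra.
  - intros x Hx. assert (0 <= 1 - x ^ 2 <= 1) by (pose proof (pow2_ge_0 x); nra).
    rewrite p0_pos by lra.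
    assert (c * (x - a) <= 0) by (assert (0 <= c * (a - x)) by (apply Rmult_le_pos; lra); lra).
    pose proof (one_plus_tanh _ H0).
    replace ((1 - x ^ 2) * tanh (c * (x - a)) + 1 * (1 - x ^ 2)) with ((1 - x ^ 2) * (1 + tanh (c * (x - a)))) by ring.
    rewrite Rabs_right by (apply Rle_ge, Rmult_le_pos; lra). nra.
  - apply W2_le; auto. lra.
Qed.

Lemma mid_right c a : 0 < c -> -1 < a < 1 ->
  Rabs (RI (fun x => p0 x * tanh (c * (x - a))) a 1 - (F0 1 - F0 a)) <= 2 / c.
Proof.
  intros Hc Ha. rewrite <- RI_poly.
  replace (RI (fun x => p0 x * tanh (c * (x - a))) a 1 - RI (fun x => 1 - x ^ 2) a 1) with
    (RI (fun x => p0 x * tanh (c * (x - a)) + - (1) * (1 - x ^ 2)) a 1)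
    by (rewrite RI_lin by (pose proof p0_cont; cont); ring).
  eapply Rle_trans. apply (RI_abs_le _ (fun x => sech (c * (x - a)) ^ 2)). pose proof p0_cont; cont. cont. lra.
  - intros x Hx. assert (0 <= 1 - x ^ 2 <= 1) by (pose proof (pow2_ge_0 x); nra).
    rewrite p0_pos by lra.
    assert (0 <= c * (x - a)) by (apply Rmult_le_pos; lra).
    pose proof (one_minus_tanh _ H0).
    replace ((1 - x ^ 2) * tanh (c * (x - a)) + - (1) * (1 - x ^ 2)) with (- ((1 - x ^ 2) * (1 - tanh (c * (x - a))))) by ring.
    rewrite Rabs_Ropp, Rabs_right by (apply Rle_ge, Rmult_le_pos; lra). nra.
  - apply W2_le; auto. lra.
Qed.

Lemma term1 e e1 e2 eps C r a c : good e e1 e2 eps C r -> -1 < a < 1 -> 0 < c ->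
  Rabs (ImpInt (fun x => e x ^ 2 * tanh (c * (x - a))) - (F0 1 - F0 a - (F0 a - F0 (-1))))
   <= 2 * (2 / 3 * (eps ^ 2 * (1 + C) * (C * / r))) + 4 * (C * (2 + C) * r) + 4 / c.
Proof.
  intros Hg Ha Hc. destruct (good_cont _ _ _ _ _ _ Hg) as (He & He1 & He2).
  pose proof Hg as (_ & _ & _ & _ & Hdec & _ & HC & Hr & Heps).
  destruct (decay_gen e (fun x => tanh (c * (x - a))) 2 Hdec) as [M [K HMK]].
  intros; pose proof (tanh_abs (c * (x - a))); lra. lia.
  apply (ImpInt_bound _ K M). cont. auto.
  intros dl Hdl. exists 2. intros u v Hu Hv.
  set (f := fun x => e x ^ 2 * tanh (c * (x - a))).
  set (g := fun x => p0 x * tanh (c * (x - a))).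
  assert (Hf : contR f) by (unfold f; cont). assert (Hgc : contR g) by (unfold g; pose proof p0_cont; cont).
  rewrite <- (RI_chasles f Hf u (-2)), <- (RI_chasles f Hf (-2) 2 v).
  pose proof (tail_bound _ _ _ _ _ _ c a Hg u (-2) ltac:(lra)) as T1.
  pose proof (tail_bound _ _ _ _ _ _ c a Hg 2 v ltac:(lra)) as T2.
  assert (Rabs (RI f u (-2)) <= 2 / 3 * (eps ^ 2 * (1 + C) * (C * / r))).
  { apply T1. intros x Hx. rewrite Rabs_left1 by lra. lra. }
  assert (Rabs (RI f 2 v) <= 2 / 3 * (eps ^ 2 * (1 + C) * (C * / r))).
  { apply T2. intros x Hx. rewrite Rabs_right by lra. lra. }
  assert (Hfg : Rabs (RI f (-2) 2 - RI g (-2) 2) <= 4 * (C * (2 + C) * r)).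
  { replace (RI f (-2) 2 - RI g (-2) 2) with (RI (fun x => f x + - (1) * g x) (-2) 2)
      by (rewrite RI_lin by auto; ring).
    eapply Rle_trans. apply (RI_abs_le _ (fun _ => C * (2 + C) * r)); auto. cont. cont. lra.
    intros x _. unfold f, g. replace (e x ^ 2 * tanh (c * (x - a)) + - (1) * (p0 x * tanh (c * (x - a))))
      with ((e x ^ 2 - p0 x) * tanh (c * (x - a))) by ring.
    rewrite Rabs_mult. pose proof (good_sq _ _ _ _ _ _ Hg x). pose proof (tanh_abs (c * (x - a))).
    apply Rle_trans with (C * (2 + C) * r * 1). apply Rmult_le_compat; auto using Rabs_pos. lra.
    rewrite RI_const. lra. }
  assert (Hz1 : RI g (-2) (-1) = 0).
  { apply RI_zero; auto. lra. intros x Hx. unfold g. rewrite p0_neg. ring. nra. }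
  assert (Hz2 : RI g 1 2 = 0).
  { apply RI_zero; auto. lra. intros x Hx. unfold g. rewrite p0_neg. ring. nra. }
  assert (Hsplit : RI g (-2) 2 = RI g (-1) a + RI g a 1).
  { rewrite <- (RI_chasles g Hgc (-2) (-1)), <- (RI_chasles g Hgc (-1) a 2), <- (RI_chasles g Hgc a 1 2).
    rewrite Hz1, Hz2. ring. }
  pose proof (mid_left c a Hc Ha). pose proof (mid_right c a Hc Ha). fold g in H1, H2.
  replace (RI f u (-2) + (RI f (-2) 2 + RI f 2 v) - (F0 1 - F0 a - (F0 a - F0 (-1)))) with
    (RI f u (-2) + RI f 2 v + (RI f (-2) 2 - RI g (-2) 2) + (RI g (-1) a + (F0 a - F0 (-1)))
      + (RI g a 1 - (F0 1 - F0 a))) by (rewrite Hsplit; ring).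
  apply Rabs_le_inv in H. apply Rabs_le_inv in H0. apply Rabs_le_inv in Hfg.
  apply Rabs_le_inv in H1. apply Rabs_le_inv in H2. apply Rabs_le. lra.
Qed.

Lemma alg (I1 I2 I3 I4 I5 eps B a b ad bd Bd s : R) : 0 < eps -> 0 < B -> 0 < s ->
  (eps * bd / s * I1 + b * s * B * ad * I2 - eps * b * s * Bd / B * I3
   + (1 - b ^ 2) * B ^ 2 * I4 + / 2 * (1 - b ^ 2) ^ 2 * I5) / (2 * eps)
  - (- bd / s * (a - / 3 * a ^ 3) + b * s * (1 - a ^ 2) * ad + 2 / 3 * (1 - a ^ 2) * (1 - b ^ 2) * B
     + / (3 * B) * (1 - a ^ 2) ^ 2 * (1 - b ^ 2) ^ 2)
  = bd / (2 * s) * (I1 - (F0 1 - F0 a - (F0 a - F0 (-1))))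
    + b * s * B * ad / 2 * ((I2 - (1 - a ^ 2) * (2 / (B / eps))) / eps)
    - b * s * Bd / (2 * B) * I3
    + (1 - b ^ 2) * B ^ 2 / 2 * ((I4 - (1 - a ^ 2) * (4 / (3 * (B / eps)))) / eps)
    + (1 - b ^ 2) ^ 2 / 4 * ((I5 - (1 - a ^ 2) ^ 2 * (4 / (3 * (B / eps)))) / eps).
Proof. intros. unfold F0. field. lra. Qed.

Lemma Rpower_1_base y : Rpower 1 y = 1.
Proof. unfold Rpower. rewrite ln_1, Rmult_0_r, exp_0. reflexivity. Qed.

Lemma r_cube eps : 0 < eps -> Rpower eps (1 / 3) ^ 3 = eps.
Proof.
  intros H. rewrite <- Rpower_pow by apply exp_pos. rewrite Rpower_mult.
  replace (1 / 3 * INR 3) with 1 by (simpl; field). apply Rpower_1; auto.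
Qed.

Lemma abs_div_le x y k : 0 < y -> Rabs x <= k -> Rabs (x / y) <= k / y.
Proof.
  intros Hy H. unfold Rdiv. rewrite Rabs_mult, (Rabs_right (/ y)) by (left; apply Rinv_0_lt_compat; auto).
  apply Rmult_le_compat_r; auto. left; apply Rinv_0_lt_compat; auto.
Qed.

Lemma abs_scale k x E : Rabs x <= E -> Rabs (k * x) <= Rabs k * E.
Proof. intros. rewrite Rabs_mult. apply Rmult_le_compat_l; auto using Rabs_pos. Qed.

Theorem lemma1 (eps0 : R) (D : nat -> R -> R -> R) (Hfam : eta_family eps0 D)
  (B a b ad bd Bd : R) (hB : 0 < B) (ha : -1 < a < 1) (hb : -1 < b < 1) :
  forall d, 0 < d -> exists e1, 0 < e1 /\
    forall eps, 0 < eps < e1 -> eps < eps0 ->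
      Rabs (L_eps (D 0%nat eps) eps B a b ad bd Bd / (2 * eps)
            - ( - bd / sqrt (1 - b ^ 2) * (a - / 3 * a ^ 3)
                + b * sqrt (1 - b ^ 2) * (1 - a ^ 2) * ad
                + 2 / 3 * (1 - a ^ 2) * (1 - b ^ 2) * B
                + / (3 * B) * (1 - a ^ 2) ^ 2 * (1 - b ^ 2) ^ 2)) < d.
Proof.
  destruct Hfam as (Heps0 & Hder & _ & Hode & Hdec & _ & _ & [C [HC Hglob]]).
  intros d Hd.
  assert (Hs : 0 < sqrt (1 - b ^ 2)) by (apply sqrt_lt_R0; nra).
  set (s := sqrt (1 - b ^ 2)) in *.
  set (K1 := C * (2 + C)).
  assert (HK1 : 0 <= K1) by (unfold K1; nra).
  set (k1 := 4 / 3 * (1 + C) * C + 4 * K1 + 4 / B).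
  set (k2 := 2 * K1 / B + 16 / B ^ 2).
  set (k3 := 8 * (1 + C) ^ 2 / B).
  set (k5 := 2 * (K1 * ((1 + C) ^ 2 + 1)) / B + 32 / B ^ 2).
  assert (HiB : 0 < / B) by (apply Rinv_0_lt_compat; auto).
  assert (HiB2 : 0 < / B ^ 2) by (apply Rinv_0_lt_compat; apply pow_lt; auto).
  assert (Hk1 : 0 <= k1) by (unfold k1, Rdiv; nra).
  assert (Hk2 : 0 <= k2) by (unfold k2, Rdiv; nra).
  assert (Hk3 : 0 <= k3) by (unfold k3, Rdiv; pose proof (pow2_ge_0 (1 + C)); nra).
  assert (Hk5 : 0 <= k5) by (unfold k5, Rdiv; pose proof (pow2_ge_0 (1 + C)); 
     assert (0 <= K1 * ((1 + C) ^ 2 + 1)) by nra; nra).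
  set (Kt := Rabs (bd / (2 * s)) * k1 + Rabs (b * s * B * ad / 2) * k2 + Rabs (b * s * Bd / (2 * B)) * k3
              + Rabs ((1 - b ^ 2) * B ^ 2 / 2) * k2 + Rabs ((1 - b ^ 2) ^ 2 / 4) * k5).
  assert (HKt : 0 <= Kt).
  { unfold Kt. pose proof (Rabs_pos (bd / (2 * s))). pose proof (Rabs_pos (b * s * B * ad / 2)).
    pose proof (Rabs_pos (b * s * Bd / (2 * B))). pose proof (Rabs_pos ((1 - b ^ 2) * B ^ 2 / 2)).
    pose proof (Rabs_pos ((1 - b ^ 2) ^ 2 / 4)). nra. }
  set (t := d / (Kt + 1)).
  assert (Ht : 0 < t) by (unfold t; apply Rdiv_lt_0_compat; lra).
  exists (Rmin (1 / 2) (t ^ 3)). split.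
  { apply Rmin_pos. lra. apply pow_lt; auto. }
  intros eps [Heps He1] Heps0'.
  assert (He1a : eps < 1 / 2) by (eapply Rlt_le_trans; [exact He1|apply Rmin_l]).
  assert (He1b : eps < t ^ 3) by (eapply Rlt_le_trans; [exact He1|apply Rmin_r]).
  set (r := Rpower eps (1 / 3)).
  assert (Hr3 : r ^ 3 = eps) by (apply r_cube; auto).
  assert (Hr0 : 0 < r) by apply exp_pos.
  assert (Hr1 : r < 1).
  { unfold r. assert (Rpower eps (1 / 3) < Rpower 1 (1 / 3)) by (apply Rlt_Rpower_l; lra).
    rewrite Rpower_1_base in H. exact H. }
  assert (Hrt : r < t).
  { unfold r. assert (Rpower eps (1 / 3) < Rpower (t ^ 3) (1 / 3)) by (apply Rlt_Rpower_l; [lra|split; auto]).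
    rewrite <- (Rpower_pow 3 t Ht), Rpower_mult in H. replace (INR 3 * (1 / 3)) with 1 in H by (simpl; field).
    rewrite Rpower_1 in H by auto. exact H. }
  assert (Hg : good (D 0%nat eps) (D 1%nat eps) (D 2%nat eps) eps C r).
  { split. intros x; apply (Hder eps (conj Heps Heps0') 0%nat x).
    split. intros x; apply (Hder eps (conj Heps Heps0') 1%nat x).
    split. apply (dcont _ (D 3%nat eps)). intros x; apply (Hder eps (conj Heps Heps0') 2%nat x).
    split. apply Hode; auto.
    split. destruct (Hdec eps (conj Heps Heps0') 1 1 ltac:(lra)) as [M HM]. exists M.
      intros x Hx. specialize (HM x Hx). rewrite Rmult_1_l in HM. auto.
    split. intros x. destruct (Hglob eps (conj Heps Heps0') x) as (G1 & G2 & _). split; auto.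
      rewrite Rpower_Ropp in G2. auto.
    split; auto. split. split; lra. auto. }
  set (c := B / eps).
  assert (Hc : 0 < c) by (unfold c; apply Rdiv_lt_0_compat; auto).
  set (e := D 0%nat eps) in *.
  pose proof (term1 _ _ _ _ _ _ a c Hg ha Hc) as T1.
  pose proof (term2 _ _ _ _ _ _ a c Hg ha Hc) as T2.
  pose proof (term3 _ _ _ _ _ _ a c Hg ha Hc) as T3.
  pose proof (term4 _ _ _ _ _ _ a c Hg ha Hc) as T4.
  pose proof (term5 _ _ _ _ _ _ a c Hg ha Hc) as T5.
  assert (Hz : forall x, B * (x - a) / eps = c * (x - a)) by (intros; unfold c; field; lra).
  unfold L_eps. cbv zeta beta.
  assert (E1 : ImpInt (fun x => e x ^ 2 * tanh (B * (x - a) / eps)) = ImpInt (fun x => e x ^ 2 * tanh (c * (x - a))))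
    by (f_equal; apply functional_extensionality; intro; rewrite Hz; reflexivity).
  assert (E2 : ImpInt (fun x => e x ^ 2 * sech (B * (x - a) / eps) ^ 2) = ImpInt (fun x => e x ^ 2 * sech (c * (x - a)) ^ 2))
    by (f_equal; apply functional_extensionality; intro; rewrite Hz; reflexivity).
  assert (E3 : ImpInt (fun x => e x ^ 2 * (B * (x - a) / eps) * sech (B * (x - a) / eps) ^ 2)
     = ImpInt (fun x => e x ^ 2 * (c * (x - a)) * sech (c * (x - a)) ^ 2))
    by (f_equal; apply functional_extensionality; intro; rewrite Hz; reflexivity).
  assert (E4 : ImpInt (fun x => e x ^ 2 * sech (B * (x - a) / eps) ^ 4) = ImpInt (fun x => e x ^ 2 * sech (c * (x - a)) ^ 4))
    by (f_equal; apply functional_extensionality; intro; rewrite Hz; reflexivity).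
  assert (E5 : ImpInt (fun x => e x ^ 4 * sech (B * (x - a) / eps) ^ 4) = ImpInt (fun x => e x ^ 4 * sech (c * (x - a)) ^ 4))
    by (f_equal; apply functional_extensionality; intro; rewrite Hz; reflexivity).
  rewrite E1, E2, E3, E4, E5.
  rewrite alg by auto. fold c.
  assert (Hrr : r ^ 2 <= 1) by (assert (r * r <= 1 * 1) by (apply Rmult_le_compat; lra); simpl; lra).
  assert (Hepsr : eps <= r) by (rewrite <- Hr3; simpl; nra).
  assert (Hr5 : r ^ 5 <= r) by (replace (r ^ 5) with (r * (r ^ 2 * r ^ 2)) by ring;
     assert (r ^ 2 * r ^ 2 <= 1) by (pose proof (pow2_ge_0 r); nra); nra).
  assert (B1 : Rabs (ImpInt (fun x : R => e x ^ 2 * tanh (c * (x - a))) - (F0 1 - F0 a - (F0 a - F0 (-1)))) <= k1 * r).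
  { eapply Rle_trans. exact T1.
    replace (2 * (2 / 3 * (eps ^ 2 * (1 + C) * (C * / r))) + 4 * (C * (2 + C) * r) + 4 / c)
      with (4 / 3 * (1 + C) * C * r ^ 5 + 4 * K1 * r + 4 * / B * r ^ 3)
      by (unfold c, K1; rewrite <- Hr3; field; lra).
    unfold k1. rewrite Hr3. unfold Rdiv.
    assert (0 <= 4 * / 3 * (1 + C) * C) by (apply Rmult_le_pos; lra).
    assert (4 * / 3 * (1 + C) * C * r ^ 5 <= 4 * / 3 * (1 + C) * C * r) by (apply Rmult_le_compat_l; auto).
    assert (4 * / B * eps <= 4 * / B * r) by (apply Rmult_le_compat_l; lra).
    lra. }
  assert (B2 : Rabs ((ImpInt (fun x : R => e x ^ 2 * sech (c * (x - a)) ^ 2) - (1 - a ^ 2) * (2 / c)) / eps) <= k2 * r).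
  { eapply Rle_trans. apply abs_div_le; [auto|exact T2].
    replace ((2 * (C * (2 + C) * r) / c + 8 * 2 / c ^ 2) / eps) with (2 * K1 * / B * r + 16 * / B ^ 2 * eps)
      by (unfold c, K1; field; lra).
    unfold k2, Rdiv. assert (16 * / B ^ 2 * eps <= 16 * / B ^ 2 * r) by (apply Rmult_le_compat_l; lra). nra. }
  assert (B4 : Rabs ((ImpInt (fun x : R => e x ^ 2 * sech (c * (x - a)) ^ 4) - (1 - a ^ 2) * (4 / (3 * c))) / eps) <= k2 * r).
  { eapply Rle_trans. apply abs_div_le; [auto|exact T4].
    replace ((2 * (C * (2 + C) * r) / c + 8 * 2 / c ^ 2) / eps) with (2 * K1 * / B * r + 16 * / B ^ 2 * eps)
      by (unfold c, K1; field; lra).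
    unfold k2, Rdiv. assert (16 * / B ^ 2 * eps <= 16 * / B ^ 2 * r) by (apply Rmult_le_compat_l; lra). nra. }
  assert (B5 : Rabs ((ImpInt (fun x : R => e x ^ 4 * sech (c * (x - a)) ^ 4) - (1 - a ^ 2) ^ 2 * (4 / (3 * c))) / eps) <= k5 * r).
  { eapply Rle_trans. apply abs_div_le; [auto|exact T5].
    replace ((2 * (C * (2 + C) * r * ((1 + C) ^ 2 + 1)) / c + 8 * 4 / c ^ 2) / eps)
      with (2 * (K1 * ((1 + C) ^ 2 + 1)) * / B * r + 32 * / B ^ 2 * eps)
      by (unfold c, K1; field; lra).
    unfold k5, Rdiv. assert (32 * / B ^ 2 * eps <= 32 * / B ^ 2 * r) by (apply Rmult_le_compat_l; lra). nra. }
  assert (B3 : Rabs (ImpInt (fun x : R => e x ^ 2 * (c * (x - a)) * sech (c * (x - a)) ^ 2)) <= k3 * r).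
  { eapply Rle_trans. exact T3.
    replace (8 * (1 + C) ^ 2 / c) with (8 * (1 + C) ^ 2 / B * eps) by (unfold c; field; lra).
    unfold k3. apply Rmult_le_compat_l; auto. }
  apply (abs_scale (bd / (2 * s))) in B1. apply (abs_scale (b * s * B * ad / 2)) in B2.
  apply (abs_scale (b * s * Bd / (2 * B))) in B3. apply (abs_scale ((1 - b ^ 2) * B ^ 2 / 2)) in B4.
  apply (abs_scale ((1 - b ^ 2) ^ 2 / 4)) in B5.
  apply Rabs_le_inv in B1. apply Rabs_le_inv in B2. apply Rabs_le_inv in B3. apply Rabs_le_inv in B4.
  apply Rabs_le_inv in B5.
  assert (HKr : Kt * r < d).
  { apply Rle_lt_trans with (Kt * t). apply Rmult_le_compat_l; lra.
    unfold t. replace d with ((Kt + 1) * (d / (Kt + 1))) at 2 by (field; lra).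
    apply Rmult_lt_compat_r. apply Rdiv_lt_0_compat; lra. lra. }
  apply Rle_lt_trans with (Kt * r); auto.
  apply Rabs_le. unfold Kt. split; nra.
Qed.
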